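(* Let $A$ be a commutative unital C*-algebra, let $f\colon L_A\to\mathcal{O}(\Sigma(A))$ be the canonical map, and define a relation $\lhd\subseteq L_A\times\mathcal{P}(L_A)$ by $x\lhd U$ iff $f(x)\le\bigvee f(U)$. (a) $\lhd$ is a covering relation and $\mathcal{O}(\Sigma(A))\cong\mathcal{F}(L_A,\lhd)$, the isomorphism sending $\mathcal{D}_a$ to the image of ${\downarrow}\mathtt{D}_a$. (b) For $a\in A_{\mathrm{sa}}$ and $U\subseteq L_A$: $\mathtt{D}_a\lhd U$ holds iff for every rational $q>0$ there is a (Kuratowski) finite $U_0\subseteq U$ with $\mathtt{D}_{a-q}\le\bigvee U_0$.
   Context: All C*-algebras are unital, $A_{\mathrm{sa}}$ denotes self-adjoint elements, $a-q$ means $a-q\cdot1$. $L_A$ is the distributive lattice freely generated by symbols $\mathtt{D}_a$ ($a\in A_{\mathrm{sa}}$) subject to $\mathtt{D}_1=1$, $\mathtt{D}_a\wedge\mathtt{D}_{-a}=0$, $\mathtt{D}_{-b^2}=0$, $\mathtt{D}_{a+b}\le\mathtt{D}_a\vee\mathtt{D}_b$, $\mathtt{D}_{ab}=(\mathtt{D}_a\wedge\mathtt{D}_b)\vee(\mathtt{D}_{-a}\wedge\mathtt{D}_{-b})$. $\mathcal{O}(\Sigma(A))$ is the frame generated by symbols $\mathcal{D}_a$ subject to the same relations plus $\mathcal{D}_a\le\bigvee_{r\in\mathbb{Q}^+}\mathcal{D}_{a-r}$, and $f(\mathtt{D}_a)=\mathcal{D}_a$. A covering relation on a meet-semilattice $L$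 is a relation $\lhd\subseteq L\times\mathcal{P}(L)$ with: (i) $x\in U\Rightarrow x\lhd U$; (ii) $x\lhd U$ and $y\lhd V$ for all $y\in U$ imply $x\lhd V$; (iii) $x\lhd U\Rightarrow x\wedge y\lhd U$; (iv) $x\lhd U$ and $x\lhd V$ imply $x\lhd U\wedge V$, where $U\wedge V=\{u\wedge v\mid u\in U,v\in V\}$. $\mathcal{F}(L,\lhd)=\{U\subseteq L\mid U\text{ down-closed},\ \forall x\,(x\lhd U\Rightarrow x\in U)\}$, ordered by inclusion; it is a frame. Reasoning is constructive. *)

(* Defs.v *)
From Stdlib Require Import Reals QArith List.
Open Scope R_scope.

Record Cx := mkCx { Cre : R; Cim : R }.
Definition Cadd (z w : Cx) : Cx := mkCx (Cre z + Cre w) (Cim z + Cim w).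
Definition Cmul (z w : Cx) : Cx :=
  mkCx (Cre z * Cre w - Cim z * Cim w) (Cre z * Cim w + Cim z * Cre w).
Definition Cconj (z : Cx) : Cx := mkCx (Cre z) (- Cim z).
Definition Cabs (z : Cx) : R := sqrt (Cre z * Cre z + Cim z * Cim z).
Definition C1 : Cx := mkCx 1 0.
Definition RtoC (r : R) : Cx := mkCx r 0.

Lemma Cconj_RtoC (r : R) : Cconj (RtoC r) = RtoC r.
Proof. unfold Cconj, RtoC; simpl. now rewrite Ropp_0. Qed.

Record CommCStarAlg := {
  car :> Type;
  zero : car; one : car;
  add : car -> car -> car; opp : car -> car; mul : car -> car -> car;
  smul : Cx -> car -> car; star : car -> car; norm : car -> R;
  add_assoc : forall x y z, add x (add y z) = add (add x y) z;
  add_comm : forall x y, add x y = add y x;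
  add_0l : forall x, add zero x = x;
  add_oppr : forall x, add x (opp x) = zero;
  smul_assoc : forall c d x, smul c (smul d x) = smul (Cmul c d) x;
  smul_1 : forall x, smul C1 x = x;
  smul_addr : forall c x y, smul c (add x y) = add (smul c x) (smul c y);
  smul_addl : forall c d x, smul (Cadd c d) x = add (smul c x) (smul d x);
  mul_assoc : forall x y z, mul x (mul y z) = mul (mul x y) z;
  mul_comm : forall x y, mul x y = mul y x;
  mul_1l : forall x, mul one x = x;
  mul_addl : forall x y z, mul (add x y) z = add (mul x z) (mul y z);
  mul_smull : forall c x y, mul (smul c x) y = smul c (mul x y);
  star_star : forall x, star (star x) = x;
  star_add : forall x y, star (add x y) = add (star x) (star y);
  star_smul : forall c x, star (smul c x) = smul (Cconj c) (star x);
  star_mul : forall x y, star (mul x y) = mul (star y) (star x);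
  norm_eq0 : forall x, norm x = 0 -> x = zero;
  norm_triangle : forall x y, norm (add x y) <= norm x + norm y;
  norm_smul : forall c x, norm (smul c x) = Cabs c * norm x;
  norm_submult : forall x y, norm (mul x y) <= norm x * norm y;
  norm_cstar : forall x, norm (mul (star x) x) = norm x * norm x;
  complete : forall u : nat -> car,
    (forall eps, 0 < eps -> exists N, forall n m, (N <= n)%nat -> (N <= m)%nat ->
        norm (add (u n) (opp (u m))) < eps) ->
    exists l, forall eps, 0 < eps -> exists N, forall n, (N <= n)%nat ->
        norm (add (u n) (opp l)) < eps
}.

Arguments zero {_}. Arguments one {_}. Arguments add {_}. Arguments opp {_}.
Arguments mul {_}. Arguments smul {_}. Arguments star {_}. Arguments norm {_}.

Section SA.
Variable A : CommCStarAlg.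

Lemma star_zero : star (@zero A) = zero.
Proof.
  assert (H : star (@zero A) = add (star zero) (star zero)).
  { rewrite <- star_add, add_0l. reflexivity. }
  assert (H2 := f_equal (fun t => add t (opp (star (@zero A)))) H). simpl in H2.
  rewrite add_oppr, <- add_assoc, add_oppr, add_comm, add_0l in H2.
  exact (eq_sym H2).
Qed.

Lemma star_opp (x : A) : star (opp x) = opp (star x).
Proof.
  assert (H : add (star x) (star (opp x)) = zero).
  { rewrite <- star_add, add_oppr. apply star_zero. }
  assert (H2 := f_equal (fun t => add (opp (star x)) t) H). simpl in H2.
  rewrite add_assoc, (add_comm _ (opp (star x))), add_oppr, add_0l in H2.
  rewrite H2, add_comm, add_0l. reflexivity.
Qed.

Lemma star_one : star (@one A) = one.
Proof.
  assert (H : star (@one A) = mul (star one) one).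
  { rewrite mul_comm, mul_1l. reflexivity. }
  assert (H2 := f_equal star H).
  rewrite star_star, star_mul, star_star, mul_comm, mul_1l in H2.
  exact (eq_sym H2).
Qed.

End SA.

Definition sa (A : CommCStarAlg) := { a : A | star a = a }.

Definition sa_one (A : CommCStarAlg) : sa A := exist _ one (star_one A).

Definition sa_add {A : CommCStarAlg} (a b : sa A) : sa A.
Proof.
  exists (add (proj1_sig a) (proj1_sig b)).
  rewrite star_add, (proj2_sig a), (proj2_sig b). reflexivity.
Defined.

Definition sa_opp {A : CommCStarAlg} (a : sa A) : sa A.
Proof.
  exists (opp (proj1_sig a)).
  rewrite star_opp, (proj2_sig a). reflexivity.
Defined.

Definition sa_mul {A : CommCStarAlg} (a b : sa A) : sa A.
Proof.
  exists (mul (proj1_sig a) (proj1_sig b)).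
  rewrite star_mul, (proj2_sig a), (proj2_sig b), mul_comm. reflexivity.
Defined.

Definition sa_rat (A : CommCStarAlg) (q : Q) : sa A.
Proof.
  exists (smul (RtoC (Q2R q)) one).
  rewrite star_smul, Cconj_RtoC, star_one. reflexivity.
Defined.

Definition sa_subq {A : CommCStarAlg} (a : sa A) (q : Q) : sa A :=
  sa_add a (sa_opp (sa_rat A q)).

Record DLattice := {
  lcar :> Type;
  le : lcar -> lcar -> Prop;
  meet : lcar -> lcar -> lcar; join : lcar -> lcar -> lcar;
  top : lcar; bot : lcar;
  le_refl : forall x, le x x;
  le_trans : forall x y z, le x y -> le y z -> le x z;
  le_antisym : forall x y, le x y -> le y x -> x = y;
  meet_glb : forall x y z, le z (meet x y) <-> (le z x /\ le z y);
  join_lub : forall x y z, le (join x y) z <-> (le x z /\ le y z);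
  top_max : forall x, le x top;
  bot_min : forall x, le bot x;
  meet_join_distr : forall x y z, meet x (join y z) = join (meet x y) (meet x z)
}.
Arguments le {_}. Arguments meet {_}. Arguments join {_}.
Arguments top {_}. Arguments bot {_}.

Record Frame := {
  fcar :> Type;
  fle : fcar -> fcar -> Prop;
  fmeet : fcar -> fcar -> fcar;
  fsup : (fcar -> Prop) -> fcar;
  ftop : fcar;
  fle_refl : forall x, fle x x;
  fle_trans : forall x y z, fle x y -> fle y z -> fle x z;
  fle_antisym : forall x y, fle x y -> fle y x -> x = y;
  fmeet_glb : forall x y z, fle z (fmeet x y) <-> (fle z x /\ fle z y);
  fsup_lub : forall (S : fcar -> Prop) z, fle (fsup S) z <-> (forall x, S x -> fle x z);
  ftop_max : forall x, fle x ftop;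
  frame_distr : forall x (S : fcar -> Prop),
      fmeet x (fsup S) = fsup (fun y => exists s, S s /\ y = fmeet x s)
}.
Arguments fle {_}. Arguments fmeet {_}. Arguments fsup {_}. Arguments ftop {_}.

Definition fjoin {F : Frame} (x y : F) : F := fsup (fun z => z = x \/ z = y).
Definition fbot {F : Frame} : F := fsup (fun _ => False).
Definition image {X Y : Type} (h : X -> Y) (U : X -> Prop) : Y -> Prop :=
  fun y => exists x, U x /\ y = h x.

Definition dlat_hom {L M : DLattice} (h : L -> M) : Prop :=
  (forall x y, h (meet x y) = meet (h x) (h y)) /\
  (forall x y, h (join x y) = join (h x) (h y)) /\
  h top = top /\ h bot = bot.

Definition frame_hom {F G : Frame} (h : F -> G) : Prop :=
  (forall x y, h (fmeet x y) = fmeet (h x) (h y)) /\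
  h ftop = ftop /\
  (forall S, h (fsup S) = fsup (image h S)).

Definition dlat_frame_hom {L : DLattice} {F : Frame} (h : L -> F) : Prop :=
  (forall x y, h (meet x y) = fmeet (h x) (h y)) /\
  (forall x y, h (join x y) = fjoin (h x) (h y)) /\
  h top = ftop /\ h bot = fbot.

Definition LA_relations {A : CommCStarAlg} (L : DLattice) (D : sa A -> L) : Prop :=
  D (sa_one A) = top /\
  (forall a, meet (D a) (D (sa_opp a)) = bot) /\
  (forall b, D (sa_opp (sa_mul b b)) = bot) /\
  (forall a b, le (D (sa_add a b)) (join (D a) (D b))) /\
  (forall a b, D (sa_mul a b) =
                 join (meet (D a) (D b)) (meet (D (sa_opp a)) (D (sa_opp b)))).

(* (L, D) is the distributive lattice freely generated by the D_a subject to
   the relations: universal property. *)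
Definition is_LA {A : CommCStarAlg} (L : DLattice) (D : sa A -> L) : Prop :=
  LA_relations L D /\
  forall (M : DLattice) (E : sa A -> M), LA_relations M E ->
    exists h : L -> M, dlat_hom h /\ (forall a, h (D a) = E a) /\
      forall h' : L -> M, dlat_hom h' -> (forall a, h' (D a) = E a) ->
        forall x, h' x = h x.

Definition OA_relations {A : CommCStarAlg} (O : Frame) (D : sa A -> O) : Prop :=
  D (sa_one A) = ftop /\
  (forall a, fmeet (D a) (D (sa_opp a)) = fbot) /\
  (forall b, D (sa_opp (sa_mul b b)) = fbot) /\
  (forall a b, fle (D (sa_add a b)) (fjoin (D a) (D b))) /\
  (forall a b, D (sa_mul a b) =
                 fjoin (fmeet (D a) (D b)) (fmeet (D (sa_opp a)) (D (sa_opp b)))) /\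
  (forall a, fle (D a) (fsup (fun y => exists r : Q, (0 < r)%Q /\ y = D (sa_subq a r)))).

(* (O, D) is the frame freely generated by the D_a subject to the relations. *)
Definition is_OA {A : CommCStarAlg} (O : Frame) (D : sa A -> O) : Prop :=
  OA_relations O D /\
  forall (G : Frame) (E : sa A -> G), OA_relations G E ->
    exists h : O -> G, frame_hom h /\ (forall a, h (D a) = E a) /\
      forall h' : O -> G, frame_hom h' -> (forall a, h' (D a) = E a) ->
        forall x, h' x = h x.

Definition meet_sets {L : DLattice} (U V : L -> Prop) : L -> Prop :=
  fun z => exists u v, U u /\ V v /\ z = meet u v.

Definition is_covering {L : DLattice} (cov : L -> (L -> Prop) -> Prop) : Prop :=
  (forall x (U : L -> Prop), U x -> cov x U) /\
  (forall x (U V : L -> Prop), cov x U -> (forall y, U y -> cov y V) -> cov x V) /\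
  (forall x y (U : L -> Prop), cov x U -> cov (meet x y) U) /\
  (forall x (U V : L -> Prop), cov x U -> cov x V -> cov x (meet_sets U V)).

Definition in_F {L : DLattice} (cov : L -> (L -> Prop) -> Prop) (U : L -> Prop) : Prop :=
  (forall x y, le y x -> U x -> U y) /\ (forall x, cov x U -> U x).

Definition F_image {L : DLattice} (cov : L -> (L -> Prop) -> Prop) (U : L -> Prop) : L -> Prop :=
  fun x => forall V, in_F cov V -> (forall y, U y -> V y) -> V x.

Definition downset {L : DLattice} (x : L) : L -> Prop := fun y => le y x.

Definition bigjoin {L : DLattice} (s : list L) : L := fold_right join bot s.

(* Main.v *)
Require Import Defs.
From Stdlib Require Import Reals QArith List Ring Lra Qreals ProofIrrelevance Lia FunctionalExtensionality PropExtensionality.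
Open Scope R_scope.

Section Alg.
Variable A : CommCStarAlg.

Lemma cst : ring_theory (@zero A) one add mul (fun x y => add x (opp y)) opp eq.
Proof. constructor; intros.
- apply add_0l. - apply add_comm. - apply add_assoc. - apply mul_1l. - apply mul_comm. - apply mul_assoc.
- apply mul_addl. - reflexivity. - apply add_oppr. Qed.
Add Ring cst : cst.

Definition iota (t : R) : A := smul (RtoC t) one.

Lemma smul0 (x : A) : smul (RtoC 0) x = zero.
Proof.
  assert (H : smul (RtoC 0) x = add (smul (RtoC 0) x) (smul (RtoC 0) x)).
  { rewrite <- smul_addl. f_equal. unfold Cadd, RtoC; simpl. f_equal; ring. }
  set (s := smul (RtoC 0) x) in *.
  transitivity (add (add s s) (opp s)); [ring | rewrite <- H; ring].
Qed.

Lemma smul_iota (t : R) (x : A) : smul (RtoC t) x = mul (iota t) x.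
Proof. unfold iota. rewrite mul_smull, mul_1l. reflexivity. Qed.

Lemma iota_add s t : iota (s + t) = add (iota s) (iota t).
Proof. unfold iota. rewrite <- smul_addl. f_equal. unfold Cadd, RtoC; simpl. f_equal; ring. Qed.

Lemma iota_mul s t : iota (s * t) = mul (iota s) (iota t).
Proof. unfold iota at 2. rewrite mul_smull, mul_1l. unfold iota. rewrite smul_assoc.
  f_equal. unfold Cmul, RtoC; simpl. f_equal; ring. Qed.

Lemma iota_0 : iota 0 = zero.
Proof. apply smul0. Qed.

Lemma iota_1 : iota 1 = one.
Proof. apply smul_1. Qed.

Lemma iota_opp t : iota (- t) = opp (iota t).
Proof.
  assert (H : add (iota (-t)) (iota t) = zero) by (rewrite <- iota_add, Rplus_opp_l; apply iota_0).
  transitivity (add (add (iota (-t)) (iota t)) (opp (iota t))); [ring | rewrite H; ring].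
Qed.

Lemma iota_sub s t : iota (s - t) = add (iota s) (opp (iota t)).
Proof. unfold Rminus. rewrite iota_add, iota_opp. reflexivity. Qed.

Lemma star_iota t : star (iota t) = iota t.
Proof. unfold iota. rewrite star_smul, Cconj_RtoC, star_one. reflexivity. Qed.

Lemma Cabs_RtoC t : Cabs (RtoC t) = Rabs t.
Proof. unfold Cabs, RtoC; simpl. rewrite Rmult_0_l, Rplus_0_r. apply sqrt_Rsqr_abs. Qed.

Lemma norm_iota_mul t (x : A) : norm (mul (iota t) x) = Rabs t * norm x.
Proof. rewrite <- smul_iota, norm_smul, Cabs_RtoC. reflexivity. Qed.

Lemma opp_iota (x : A) : opp x = mul (iota (Ropp 1)) x.
Proof. rewrite iota_opp, iota_1. ring. Qed.

Lemma norm_opp (x : A) : norm (opp x) = norm x.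
Proof. rewrite opp_iota, norm_iota_mul, Rabs_Ropp, Rabs_R1. ring. Qed.

Lemma norm_zero : norm (@zero A) = 0.
Proof. rewrite <- iota_0. rewrite <- (Rmult_0_l 0) at 1. rewrite iota_mul, norm_iota_mul, Rabs_R0. ring. Qed.

Lemma norm_nonneg (x : A) : 0 <= norm x.
Proof.
  pose proof (norm_triangle _ x (opp x)) as H. rewrite add_oppr, norm_zero, norm_opp in H. lra.
Qed.

Lemma star_opp' (x : A) : star (opp x) = opp (star x).
Proof. rewrite !opp_iota, star_mul, star_iota, mul_comm. reflexivity. Qed.

Lemma norm_star_le (x : A) : norm x <= norm (star x).
Proof.
  pose proof (norm_cstar _ x) as H. pose proof (norm_submult _ (star x) x) as H2.
  pose proof (norm_nonneg x). pose proof (norm_nonneg (star x)).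
  destruct (Req_dec (norm x) 0) as [E|E]; [lra|].
  nra.
Qed.

Lemma norm_star (x : A) : norm (star x) = norm x.
Proof. apply Rle_antisym; [ | apply norm_star_le]. rewrite <- (star_star _ x) at 2. apply norm_star_le. Qed.

Definition dist (x y : A) := norm (add x (opp y)).

Lemma dist_sym x y : dist x y = dist y x.
Proof. unfold dist. rewrite <- norm_opp. f_equal. ring. Qed.

Lemma dist_tri x y z : dist x z <= dist x y + dist y z.
Proof. unfold dist. replace (add x (opp z)) with (add (add x (opp y)) (add y (opp z))) by ring.
  apply norm_triangle. Qed.

Lemma zero_of_small (w : A) : (forall eps, 0 < eps -> norm w < eps) -> w = zero.
Proof.
  intros H. apply norm_eq0. pose proof (norm_nonneg w).
  destruct (Rle_lt_dec (norm w) 0); [lra|]. specialize (H _ r). lra.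
Qed.

Section Sq.
Variable x : A.
Hypothesis xsa : star x = x.
Hypothesis xn : norm x <= 1/2.

Fixpoint zs (n : nat) : A :=
  match n with O => zero | S n => mul (iota (1/2)) (add x (mul (zs n) (zs n))) end.

Lemma zs_sa n : star (zs n) = zs n.
Proof. induction n; simpl. apply star_zero.
  rewrite star_mul, star_iota, star_add, star_mul, IHn, xsa, mul_comm. reflexivity. Qed.

Lemma zs_bound n : norm (zs n) <= 1/2.
Proof. induction n; simpl. rewrite norm_zero; lra.
  rewrite norm_iota_mul. rewrite Rabs_right by lra.
  pose proof (norm_triangle _ x (mul (zs n) (zs n))).
  pose proof (norm_submult _ (zs n) (zs n)). pose proof (norm_nonneg (zs n)).
  assert (norm (zs n) * norm (zs n) <= 1/4) by nra.
  pose proof (norm_nonneg (add x (mul (zs n) (zs n)))). nra. Qed.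

Lemma zs_step n : dist (zs (S n)) (zs n) <= /4 * (1/2)^n.
Proof. induction n.
  - simpl. unfold dist. replace (add (mul (iota (1/2)) (add x (mul zero zero))) (opp zero))
      with (mul (iota (1/2)) x) by ring. rewrite norm_iota_mul, Rabs_right by lra. lra.
  - unfold dist in *. 
    replace (add (zs (S (S n))) (opp (zs (S n)))) with
      (mul (iota (1/2)) (mul (add (zs (S n)) (opp (zs n))) (add (zs (S n)) (zs n))))
      by (simpl; ring).
    rewrite norm_iota_mul, Rabs_right by lra.
    pose proof (norm_submult _ (add (zs (S n)) (opp (zs n))) (add (zs (S n)) (zs n))).
    pose proof (norm_triangle _ (zs (S n)) (zs n)).
    pose proof (zs_bound (S n)). pose proof (zs_bound n).
    pose proof (norm_nonneg (add (zs (S n)) (opp (zs n)))).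
    pose proof (norm_nonneg (add (zs (S n)) (zs n))).
    simpl pow. 
    assert (norm (mul (add (zs (S n)) (opp (zs n))) (add (zs (S n)) (zs n))) <=
            norm (add (zs (S n)) (opp (zs n)))) by nra.
    nra.
Qed.

Lemma zs_cauchy n k : dist (zs (n + k)) (zs n) <= (1/2)^(S n) - (1/2)^(S (n+k)).
Proof. induction k.
  - rewrite Nat.add_0_r. unfold dist. rewrite add_oppr, norm_zero. lra.
  - pose proof (dist_tri (zs (n + S k)) (zs (n + k)) (zs n)).
    replace (n + S k)%nat with (S (n + k)) in * by lia.
    pose proof (zs_step (n + k)). simpl pow in *. lra.
Qed.

Lemma zs_cauchy2 N m : (N <= m)%nat -> dist (zs m) (zs N) <= (1/2)^N.
Proof. intros H. replace m with (N + (m - N))%nat by lia.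
  pose proof (zs_cauchy N (m - N)).
  assert (0 <= (1/2)^(S (N + (m-N)))) by (apply pow_le; lra). assert (0 <= (1/2)^N) by (apply pow_le; lra). simpl pow in *. lra. Qed.

Lemma sqrt_exists : exists y : A, star y = y /\ mul y y = add one (opp x).
Proof.
  destruct (complete _ zs) as [l Hl].
  { intros eps He. destruct (pow_lt_1_zero (1/2) ltac:(rewrite Rabs_right; lra) (eps/2) ltac:(lra)) as [N HN].
    exists N. intros n m Hn Hm.
    pose proof (zs_cauchy2 N n Hn). pose proof (zs_cauchy2 N m Hm).
    pose proof (dist_tri (zs n) (zs N) (zs m)). rewrite (dist_sym (zs N) (zs m)) in *.
    specialize (HN N (le_n _)). rewrite Rabs_right in HN by (apply Rle_ge, pow_le; lra).
    unfold dist in *. lra. }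
  assert (Hl' : forall eps, 0 < eps -> exists N, forall n, (N <= n)%nat -> dist (zs n) l < eps) by exact Hl.
  assert (lsa : star l = l).
  { assert (star l = add l (add (star l) (opp l))) by ring.
    rewrite H. replace (add (star l) (opp l)) with (@zero A). ring.
    symmetry. apply zero_of_small. intros eps He.
    destruct (Hl' (eps/2) ltac:(lra)) as [N HN]. specialize (HN N (le_n _)).
    pose proof (dist_tri (star l) (zs N) l). unfold dist in *.
    replace (add (star l) (opp (zs N))) with (star (add l (opp (zs N)))) in H0
      by (rewrite star_add, star_opp', zs_sa; reflexivity).
    rewrite norm_star in H0.
    rewrite <- (norm_opp (add l (opp (zs N)))) in H0. replace (opp (add l (opp (zs N)))) with (add (zs N) (opp l)) in H0 by ring.
    lra. }
  set (K := 1/2 + norm l).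
  assert (HK : 0 <= K) by (pose proof (norm_nonneg l); unfold K; lra).
  assert (Hfix : l = mul (iota (1/2)) (add x (mul l l))).
  { assert (l = add (mul (iota (1/2)) (add x (mul l l))) (add l (opp (mul (iota (1/2)) (add x (mul l l)))))) by ring.
    rewrite H at 1. replace (add l (opp (mul (iota (1/2)) (add x (mul l l))))) with (@zero A). ring.
    symmetry. apply zero_of_small. intros eps He.
    destruct (Hl' (eps / (1 + K)) ltac:(apply Rdiv_lt_0_compat; lra)) as [N HN].
    pose proof (HN N (le_n _)) as H1. pose proof (HN (S N) (le_S _ _ (le_n _))) as H2.
    unfold dist in *.
    replace (add l (opp (mul (iota (1/2)) (add x (mul l l))))) with
      (add (add l (opp (zs (S N)))) (mul (iota (1/2)) (mul (add (zs N) (opp l)) (add (zs N) l))))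
      by (simpl; ring).
    eapply Rle_lt_trans. apply norm_triangle.
    rewrite norm_iota_mul, Rabs_right by lra.
    pose proof (norm_submult _ (add (zs N) (opp l)) (add (zs N) l)).
    pose proof (norm_triangle _ (zs N) l). pose proof (zs_bound N).
    rewrite <- norm_opp in H2. replace (opp (add (zs (S N)) (opp l))) with (add l (opp (zs (S N)))) in H2 by ring.
    pose proof (norm_nonneg (add (zs N) (opp l))).
    pose proof (norm_nonneg (add (zs N) l)).
    assert (norm (add (zs N) l) <= K) by (unfold K; lra).
    assert (norm (mul (add (zs N) (opp l)) (add (zs N) l)) <= eps / (1 + K) * K) by nra.
    assert (eps / (1 + K) * (1 + K) = eps) by (field; lra).
    nra. }
  exists (add (@one A) (opp l)). split.
  - rewrite star_add, star_opp', lsa, star_one. reflexivity.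
  - transitivity (add (add (@one A) (opp x)) (add (mul l l) (add x (opp (mul (iota 2) l))))).
    2:{ rewrite Hfix at 3. rewrite mul_assoc, <- iota_mul.
        replace (2 * (1/2)) with 1 by field. rewrite iota_1. ring. }
    replace (iota 2) with (add (@one A) one) by (rewrite <- iota_1, <- iota_add; f_equal; ring).
    ring.
Qed.
End Sq.

Lemma bound (c : A) : star c = c ->
  exists M, 0 < M /\ exists y : A, star y = y /\ mul y y = add (iota M) (opp c).
Proof.
  intros Hc. pose proof (norm_nonneg c) as Hn.
  set (s := / (2 * (norm c + 1))).
  assert (Hs : 0 < s) by (unfold s; apply Rinv_0_lt_compat; lra).
  destruct (sqrt_exists (mul (iota s) c)) as [y0 [Hy0 Ey0]].
  - rewrite star_mul, star_iota, Hc, mul_comm. reflexivity.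
  - rewrite norm_iota_mul, Rabs_right by lra. unfold s.
    apply (Rmult_le_reg_l (2 * (norm c + 1))); [lra|].
    rewrite <- Rmult_assoc, Rinv_r by lra. lra.
  - exists (/ s). split; [apply Rinv_0_lt_compat; lra|].
    exists (mul (iota (sqrt (/ s))) y0). split.
    + rewrite star_mul, star_iota, Hy0, mul_comm. reflexivity.
    + transitivity (mul (mul (iota (sqrt (/ s))) (iota (sqrt (/ s)))) (mul y0 y0)); [ring|].
      rewrite <- iota_mul, sqrt_sqrt by (left; apply Rinv_0_lt_compat; lra).
      rewrite Ey0. transitivity (add (iota (/ s)) (opp (mul (mul (iota (/ s)) (iota s)) c))); [ring|].
      rewrite <- iota_mul, Rinv_l by lra. rewrite iota_1. ring.
Qed.
End Alg.


Section Lat.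
Variable L : DLattice.
Implicit Types x y z : L.

Lemma meet_lb1 x y : le (meet x y) x.
Proof. apply (proj1 (meet_glb L x y (meet x y))), le_refl. Qed.
Lemma meet_lb2 x y : le (meet x y) y.
Proof. apply (proj1 (meet_glb L x y (meet x y))), le_refl. Qed.
Lemma le_meetI x y z : le z x -> le z y -> le z (meet x y).
Proof. intros; apply meet_glb; auto. Qed.
Lemma join_ub1 x y : le x (join x y).
Proof. apply (proj1 (join_lub L x y (join x y))), le_refl. Qed.
Lemma join_ub2 x y : le y (join x y).
Proof. apply (proj1 (join_lub L x y (join x y))), le_refl. Qed.
Lemma join_leI x y z : le x z -> le y z -> le (join x y) z.
Proof. intros; apply join_lub; auto. Qed.
Lemma meet_comm x y : meet x y = meet y x.
Proof. apply le_antisym; apply le_meetI; (apply meet_lb1 || apply meet_lb2). Qed.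
Lemma meet_top x : meet x top = x.
Proof. apply le_antisym. apply meet_lb1. apply le_meetI. apply le_refl. apply top_max. Qed.
Lemma le_bot_eq x : le x bot -> x = bot.
Proof. intros; apply le_antisym; auto. apply bot_min. Qed.
Lemma top_le_eq x : le top x -> x = top.
Proof. intros; apply le_antisym; auto. apply top_max. Qed.
Lemma meet_mono x x' y y' : le x x' -> le y y' -> le (meet x y) (meet x' y').
Proof. intros. apply le_meetI; [eapply le_trans; [apply meet_lb1|] | eapply le_trans; [apply meet_lb2|]]; auto. Qed.
Lemma join_mono x x' y y' : le x x' -> le y y' -> le (join x y) (join x' y').
Proof. intros. apply join_leI; [eapply le_trans; [|apply join_ub1] | eapply le_trans; [|apply join_ub2]]; auto. Qed.
Lemma le_meet_eq x y : le x y -> meet x y = x.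
Proof. intros. apply le_antisym. apply meet_lb1. apply le_meetI; auto. apply le_refl. Qed.

Lemma split_le c1 c2 z T : le top (join c1 c2) -> le (meet z c1) T -> le (meet z c2) T -> le z T.
Proof.
  intros H1 H2 H3. rewrite <- (meet_top z).
  eapply le_trans. apply meet_mono. apply le_refl. apply H1.
  rewrite meet_join_distr. apply join_leI; auto.
Qed.

Lemma bigjoin_le (l : list L) z : (forall y, In y l -> le y z) -> le (bigjoin l) z.
Proof. induction l; simpl; intros H. apply bot_min. apply join_leI; auto. Qed.

Lemma le_bigjoin (l : list L) y : In y l -> le y (bigjoin l).
Proof. induction l; simpl; intros H. destruct H. destruct H as [<-|H]. apply join_ub1.
  eapply le_trans. apply IHl; auto. apply join_ub2. Qed.

Lemma meet_bigjoin x (l : list L) : meet x (bigjoin l) = bigjoin (map (meet x) l).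
Proof. induction l; simpl. apply le_bot_eq, meet_lb2. rewrite meet_join_distr, IHl. reflexivity. Qed.

Lemma meet_assoc x y z : meet x (meet y z) = meet (meet x y) z.
Proof. apply le_antisym; repeat apply le_meetI; eauto using le_trans, meet_lb1, meet_lb2. Qed.
End Lat.

Section Fr.
Variable F : Frame.
Implicit Types x y z : F.

Lemma fle_sup (S : F -> Prop) x : S x -> fle x (fsup S).
Proof. intros. apply (proj1 (fsup_lub F S (fsup S))). apply fle_refl. auto. Qed.
Lemma fsup_le (S : F -> Prop) z : (forall x, S x -> fle x z) -> fle (fsup S) z.
Proof. intros. apply fsup_lub. auto. Qed.
Lemma fmeet_lb1 x y : fle (fmeet x y) x.
Proof. apply (proj1 (fmeet_glb F x y (fmeet x y))), fle_refl. Qed.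
Lemma fmeet_lb2 x y : fle (fmeet x y) y.
Proof. apply (proj1 (fmeet_glb F x y (fmeet x y))), fle_refl. Qed.
Lemma fle_meetI x y z : fle z x -> fle z y -> fle z (fmeet x y).
Proof. intros; apply fmeet_glb; auto. Qed.
Lemma fmeet_comm x y : fmeet x y = fmeet y x.
Proof. apply fle_antisym; apply fle_meetI; (apply fmeet_lb1 || apply fmeet_lb2). Qed.
Lemma fjoin_ub1 x y : fle x (fjoin x y).
Proof. apply fle_sup. auto. Qed.
Lemma fjoin_ub2 x y : fle y (fjoin x y).
Proof. apply fle_sup. auto. Qed.
Lemma fjoin_le x y z : fle x z -> fle y z -> fle (fjoin x y) z.
Proof. intros. apply fsup_le. intros w [->| ->]; auto. Qed.
Lemma fbot_le z : fle fbot z.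
Proof. apply fsup_le. intros _ []. Qed.
Lemma fle_meet_eq x y : fle x y -> fmeet x y = x.
Proof. intros. apply fle_antisym. apply fmeet_lb1. apply fle_meetI; auto. apply fle_refl. Qed.
Lemma fsup_mono (S T : F -> Prop) : (forall x, S x -> exists y, T y /\ fle x y) -> fle (fsup S) (fsup T).
Proof. intros H. apply fsup_le. intros x Sx. destruct (H x Sx) as [y [Ty Hy]].
  eapply fle_trans. apply Hy. apply fle_sup; auto. Qed.
End Fr.

Lemma frame_hom_mono {F G : Frame} (h : F -> G) : frame_hom h -> forall x y, fle x y -> fle (h x) (h y).
Proof. intros [Hm _] x y Hxy. rewrite <- (fle_meet_eq _ _ _ Hxy), Hm. apply fmeet_lb2. Qed.

Lemma dfhom_mono {L : DLattice} {F : Frame} (h : L -> F) : dlat_frame_hom h -> forall x y, le x y -> fle (h x) (h y).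
Proof. intros [Hm _] x y Hxy. rewrite <- (le_meet_eq _ _ _ Hxy), Hm. apply fmeet_lb2. Qed.

Lemma dfhom_bigjoin {L : DLattice} {F : Frame} (h : L -> F) (Hh : dlat_frame_hom h) (l : list L) z :
  (forall y, In y l -> fle (h y) z) -> fle (h (bigjoin l)) z.
Proof. destruct Hh as [_ [Hj [_ Hb]]]. induction l; simpl; intros H.
  rewrite Hb. apply fbot_le. rewrite Hj. apply fjoin_le; auto. Qed.


Section DL.
Variable A : CommCStarAlg.
Add Ring cstA : (cst A).
Variable L : DLattice.
Variable DL : sa A -> L.
Hypothesis HR : LA_relations L DL.

Definition SA (x : A) := star x = x.

Lemma SA_add x y : SA x -> SA y -> SA (add x y).
Proof. unfold SA; intros; rewrite star_add; congruence. Qed.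
Lemma SA_mul x y : SA x -> SA y -> SA (mul x y).
Proof. unfold SA; intros; rewrite star_mul, H, H0; apply mul_comm. Qed.
Lemma SA_opp x : SA x -> SA (opp x).
Proof. unfold SA; intros; rewrite star_opp'; congruence. Qed.
Lemma SA_iota t : SA (iota A t).
Proof. apply star_iota. Qed.
Lemma SA_one : SA one.
Proof. apply star_one. Qed.
Hint Resolve SA_add SA_mul SA_opp SA_iota SA_one : sa.

Definition symm (x : A) : A := mul (iota A (1/2)) (add x (star x)).
Lemma symm_sa x : star (symm x) = symm x.
Proof. unfold symm. rewrite star_mul, star_iota, star_add, star_star, mul_comm. f_equal. ring. Qed.
Lemma iota_2 : iota A 2 = add one one.
Proof. rewrite <- iota_1, <- iota_add. f_equal; try ring. Qed.
Lemma symm_id x : SA x -> symm x = x.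
Proof. unfold SA, symm; intros H. rewrite H.
  transitivity (mul (mul (iota A (1/2)) (iota A 2)) x).
  rewrite iota_2; ring. rewrite <- iota_mul. replace (1/2*2) with 1 by field. rewrite iota_1. ring. Qed.

Definition Dc (x : A) : L := DL (exist _ (symm x) (symm_sa x)).

Lemma sa_ext (u v : sa A) : proj1_sig u = proj1_sig v -> u = v.
Proof. destruct u, v; simpl; intros; subst; f_equal; apply proof_irrelevance. Qed.

Lemma D_Dc u : DL u = Dc (proj1_sig u).
Proof. unfold Dc. f_equal. apply sa_ext. simpl. symmetry. apply symm_id. apply (proj2_sig u). Qed.

Ltac dd u := let E := fresh in pose proof (D_Dc u) as E;
  cbn [proj1_sig sa_one sa_add sa_opp sa_mul] in E; rewrite <- E; clear E.

Lemma Dc_one : Dc one = top.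
Proof. dd (sa_one A). apply HR. Qed.
Lemma Dc_meet_opp x : SA x -> meet (Dc x) (Dc (opp x)) = bot.
Proof. intros H. dd (exist _ x H). dd (sa_opp (exist _ x H)). apply HR. Qed.
Lemma Dc_sq b : SA b -> Dc (opp (mul b b)) = bot.
Proof. intros H. dd (sa_opp (sa_mul (exist _ b H) (exist _ b H))). apply HR. Qed.
Lemma Dc_add x y : SA x -> SA y -> le (Dc (add x y)) (join (Dc x) (Dc y)).
Proof. intros Hx Hy. dd (sa_add (exist _ x Hx) (exist _ y Hy)). dd (exist _ x Hx). dd (exist _ y Hy). apply HR. Qed.
Lemma Dc_mul x y : SA x -> SA y -> Dc (mul x y) = join (meet (Dc x) (Dc y)) (meet (Dc (opp x)) (Dc (opp y))).
Proof. intros Hx Hy. dd (sa_mul (exist _ x Hx) (exist _ y Hy)). dd (sa_opp (exist _ x Hx)). dd (sa_opp (exist _ y Hy)). dd (exist _ x Hx). dd (exist _ y Hy). apply HR. Qed.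

Lemma R2 x y : SA x -> SA y -> le (meet (Dc x) (Dc y)) (Dc (mul x y)).
Proof. intros. rewrite Dc_mul by auto. apply join_ub1. Qed.

Lemma Dc_iota_nonpos t : t <= 0 -> Dc (iota A t) = bot.
Proof. intros H. rewrite <- (Dc_sq (iota A (sqrt (- t)))) by auto 10 with sa. f_equal.
  rewrite <- iota_mul, sqrt_sqrt by lra. rewrite <- iota_opp. f_equal. ring. Qed.

Lemma Dc_iota_pos t : 0 < t -> Dc (iota A t) = top.
Proof. intros H. apply top_le_eq. rewrite <- Dc_one.
  replace (@one A) with (mul (iota A t) (iota A (/ t))) by (rewrite <- iota_mul, Rinv_r by lra; apply iota_1).
  rewrite Dc_mul by auto 10 with sa. apply join_leI. apply meet_lb1.
  rewrite <- iota_opp, Dc_iota_nonpos by lra. eapply le_trans. apply meet_lb1. apply bot_min. Qed.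

Lemma R5 x y : SA x -> SA y -> Dc y = bot -> le (Dc (add x y)) (Dc x).
Proof. intros Hx Hy Hb. eapply le_trans. apply Dc_add; auto. rewrite Hb. apply join_leI. apply le_refl. apply bot_min. Qed.

Lemma R1 x y : SA x -> SA y -> le (meet (Dc x) (Dc y)) (Dc (add x y)).
Proof. intros Hx Hy.
  assert (E : x = add (add x y) (opp y)) by ring.
  assert (H : le (Dc x) (join (Dc (add x y)) (Dc (opp y)))) by (rewrite E at 1; apply Dc_add; auto 10 with sa).
  eapply le_trans. apply meet_mono. apply H. apply le_refl.
  rewrite meet_comm, meet_join_distr. apply join_leI. apply meet_lb2.
  rewrite Dc_meet_opp by auto. apply bot_min. Qed.

Lemma Dshift x t : SA x -> t <= 0 -> le (Dc (add x (iota A t))) (Dc x).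
Proof. intros. apply R5; auto 10 with sa. apply Dc_iota_nonpos; auto. Qed.

Lemma Dc_top_mul x y : SA x -> SA y -> Dc x = top -> Dc y = top -> Dc (mul x y) = top.
Proof. intros. apply top_le_eq. rewrite <- (meet_top _ top) at 1. rewrite <- H1 at 1. rewrite <- H2.
  apply R2; auto. Qed.

Lemma Dc_top_add x y : SA x -> SA y -> Dc y = top -> le (Dc x) (Dc (add x y)).
Proof. intros. rewrite <- (meet_top _ (Dc x)), <- H1. apply R1; auto. Qed.

Lemma Bnd c : SA c -> exists N, 0 < N /\ forall N', N <= N' -> Dc (add (iota A N') (opp c)) = top.
Proof.
  intros Hc. destruct (bound A c Hc) as [M [HM [y [Hy Ey]]]].
  exists (2 * M). split. lra. intros N' HN'. apply top_le_eq.
  rewrite <- (Dc_iota_pos (N' - M)) by lra.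
  replace (iota A (N' - M)) with (add (add (iota A N') (opp c)) (opp (mul y y))) by (rewrite Ey, iota_sub; ring).
  apply R5; auto 10 with sa. apply Dc_sq; auto.
Qed.

Lemma Bnd2 a b : SA a -> SA b -> exists N, 0 < N /\
  Dc (add (iota A N) (opp a)) = top /\ Dc (add (iota A N) a) = top /\
  Dc (add (iota A N) (opp b)) = top /\ Dc (add (iota A N) b) = top.
Proof.
  intros Ha Hb.
  destruct (Bnd a Ha) as [N1 [P1 H1]]. destruct (Bnd (opp a) (SA_opp _ Ha)) as [N2 [P2 H2]].
  destruct (Bnd b Hb) as [N3 [P3 H3]]. destruct (Bnd (opp b) (SA_opp _ Hb)) as [N4 [P4 H4]].
  exists (N1 + N2 + N3 + N4). split. lra.
  split. apply H1; lra. split. rewrite <- (H2 (N1 + N2 + N3 + N4)) by lra. f_equal; ring.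
  split. apply H3; lra. rewrite <- (H4 (N1 + N2 + N3 + N4)) by lra. f_equal; ring.
Qed.

Ltac inorm := repeat (rewrite iota_sub || rewrite iota_add || rewrite iota_mul || rewrite iota_opp || rewrite iota_2 || rewrite iota_1 || rewrite iota_0); ring.

Lemma split_case x r : SA x -> 0 < r ->
  le top (join (Dc (add x (opp (iota A r)))) (Dc (add (iota A (2 * r)) (opp x)))).
Proof. intros. rewrite <- (Dc_iota_pos r) by auto.
  replace (iota A r) with (add (add x (opp (iota A r))) (add (iota A (2 * r)) (opp x))) at 1 by inorm.
  apply Dc_add; auto 10 with sa. Qed.

Lemma caseA x y N r q : SA x -> SA y -> 0 < r -> 2 * r * N - q <= 0 ->
  Dc (add (iota A N) (opp x)) = top ->
  le (meet (meet (Dc (add (mul x y) (opp (iota A q)))) (Dc (add x (opp (iota A r)))))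
           (Dc (add (iota A (2 * r)) (opp y)))) bot.
Proof.
  intros Hx Hy Hr Hq HN.
  rewrite <- (Dc_iota_nonpos (2 * r * N - q)) by auto.
  assert (E : iota A (2 * r * N - q) = add (add (mul x y) (opp (iota A q)))
      (add (mul x (add (iota A (2 * r)) (opp y))) (mul (iota A (2 * r)) (add (iota A N) (opp x))))) by inorm.
  rewrite E. rewrite <- meet_assoc. eapply le_trans; [| apply R1; auto 10 with sa].
  apply meet_mono. apply le_refl.
  eapply le_trans; [| apply Dc_top_add; auto 10 with sa].
  2:{ apply Dc_top_mul; auto 10 with sa. apply Dc_iota_pos; lra. }
  eapply le_trans; [| apply R2; auto 10 with sa]. apply meet_mono; [|apply le_refl].
  rewrite <- (iota_opp A r). apply Dshift; auto. lra.
Qed.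

Lemma caseB x y N r q : SA x -> SA y -> 0 < r -> 2 * (2 * r) * N - 2 * q <= 0 ->
  Dc (add (iota A N) (opp y)) = top -> Dc (add (iota A N) y) = top ->
  le (meet (meet (Dc (add (mul x y) (opp (iota A q)))) (Dc (add (iota A (2 * r)) (opp x))))
           (Dc (add (iota A (2 * r)) (opp (opp x))))) bot.
Proof.
  intros Hx Hy Hr Hq HN1 HN2.
  rewrite <- (Dc_iota_nonpos (2 * (2 * r) * N - 2 * q)) by auto.
  assert (E : iota A (2 * (2 * r) * N - 2 * q) = add (mul (iota A 2) (add (mul x y) (opp (iota A q))))
      (add (mul (add (iota A (2 * r)) (opp x)) (add (iota A N) y))
           (mul (add (iota A (2 * r)) (opp (opp x))) (add (iota A N) (opp y))))) by inorm.
  rewrite E. rewrite <- meet_assoc. eapply le_trans; [| apply R1; auto 10 with sa].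
  apply meet_mono.
  - rewrite <- (meet_top _ (Dc (add (mul x y) (opp (iota A q))))), <- (Dc_iota_pos 2) by lra.
    rewrite meet_comm. apply R2; auto 10 with sa.
  - eapply le_trans; [| apply R1; auto 10 with sa]. apply meet_mono.
    + rewrite <- (meet_top _ (Dc (add (iota A (2 * r)) (opp x)))), <- HN2. apply R2; auto 10 with sa.
    + rewrite <- (meet_top _ (Dc (add (iota A (2 * r)) (opp (opp x))))), <- HN1. apply R2; auto 10 with sa.
Qed.

Lemma R1' z x y : SA x -> SA y -> le z (Dc x) -> le z (Dc y) -> le z (Dc (add x y)).
Proof. intros. eapply le_trans; [|apply R1; auto]. apply le_meetI; auto. Qed.
Lemma R2' z x y : SA x -> SA y -> le z (Dc x) -> le z (Dc y) -> le z (Dc (mul x y)).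
Proof. intros. eapply le_trans; [|apply R2; auto]. apply le_meetI; auto. Qed.
Lemma Dtop z t : 0 < t -> le z (Dc (iota A t)).
Proof. intros. rewrite Dc_iota_pos by auto. apply top_max. Qed.

Definition sub (a : A) (q : Q) := add a (opp (iota A (Q2R q))).

Lemma SA_sub a q : SA a -> SA (sub a q).
Proof. unfold sub; auto 10 with sa. Qed.
Hint Resolve SA_sub : sa.

Lemma E_mono a q q' : SA a -> (q' <= q)%Q -> le (Dc (sub a q)) (Dc (sub a q')).
Proof. intros Ha H. apply Qle_Rle in H. unfold sub.
  replace (add a (opp (iota A (Q2R q)))) with (add (add a (opp (iota A (Q2R q')))) (iota A (Q2R q' - Q2R q))) by inorm.
  apply Dshift; auto 10 with sa. lra. Qed.

Lemma E_le a q : SA a -> (0 <= q)%Q -> le (Dc (sub a q)) (Dc a).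
Proof. intros Ha H. apply Qle_Rle in H. unfold sub. rewrite <- iota_opp. apply Dshift; auto.
  change (Q2R 0) with (0 * / 1) in H. lra. Qed.

Lemma Q2R_pos q : (0 < q)%Q -> 0 < Q2R q.
Proof. intros H. apply Qlt_Rlt in H. change (Q2R 0) with (0 * / 1) in H. lra. Qed.

Lemma E_one : Dc (sub one (1 # 2)) = top.
Proof. unfold sub. rewrite <- iota_1, <- iota_sub. apply Dc_iota_pos.
  unfold Q2R; simpl. lra. Qed.

Lemma E_opp a q q' : SA a -> (0 < q)%Q -> (0 < q')%Q -> le (meet (Dc (sub a q)) (Dc (sub (opp a) q'))) bot.
Proof. intros Ha H1 H2. apply Q2R_pos in H1. apply Q2R_pos in H2.
  rewrite <- (Dc_iota_nonpos (- (Q2R q + Q2R q'))) by lra.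
  replace (iota A (- (Q2R q + Q2R q'))) with (add (sub a q) (sub (opp a) q')) by (unfold sub; inorm).
  apply R1; auto 10 with sa. Qed.

Lemma E_sq b q : SA b -> (0 < q)%Q -> Dc (sub (opp (mul b b)) q) = bot.
Proof. intros. apply le_bot_eq. eapply le_trans. apply E_le; auto 10 with sa. apply Qlt_le_weak; auto.
  rewrite Dc_sq; auto. apply le_refl. Qed.

Lemma E_add a b q : SA a -> SA b ->
  le (Dc (sub (add a b) q)) (join (Dc (sub a (q * (1 # 2)))) (Dc (sub b (q * (1 # 2))))).
Proof. intros. replace (sub (add a b) q) with (add (sub a (q * (1 # 2))) (sub b (q * (1 # 2)))).
  apply Dc_add; auto 10 with sa.
  unfold sub. rewrite Q2R_mult. replace (Q2R (1 # 2)) with (/2) by (unfold Q2R; simpl; field).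
  transitivity (add (add a b) (opp (iota A (Q2R q * / 2 + Q2R q * / 2)))).
  inorm. f_equal. f_equal. f_equal. field. Qed.

Lemma E_mul_ge a b r : SA a -> SA b -> (0 < r)%Q ->
  le (meet (Dc (sub a r)) (Dc (sub b r))) (Dc (sub (mul a b) (r * r))).
Proof. intros Ha Hb Hr. pose proof (Q2R_pos _ Hr) as HR'.
  replace (sub (mul a b) (r * r)) with
   (add (add (mul (sub a r) (sub b r)) (mul (iota A (Q2R r)) (sub a r)))
        (mul (iota A (Q2R r)) (sub b r)))
   by (unfold sub; rewrite Q2R_mult; inorm).
  apply R1'; auto 20 with sa; [apply R1'; auto 20 with sa|].
  - apply R2'; auto 10 with sa. apply meet_lb1. apply meet_lb2.
  - apply R2'; auto 10 with sa. apply Dtop; auto. apply meet_lb1.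
  - apply R2'; auto 10 with sa. apply Dtop; auto. apply meet_lb2.
Qed.

Lemma E_mul_le a b q : SA a -> SA b -> (0 < q)%Q -> exists r, (0 < r)%Q /\
  le (Dc (sub (mul a b) q)) (join (meet (Dc (sub a r)) (Dc (sub b r))) (meet (Dc (sub (opp a) r)) (Dc (sub (opp b) r)))).
Proof.
  intros Ha Hb Hq. pose proof (Q2R_pos _ Hq) as HQ.
  destruct (Bnd2 a b Ha Hb) as [N [HN [Na1 [Na2 [Nb1 Nb2]]]]].
  destruct (archimed (4 * N)) as [Hup _].
  destruct (up (4 * N)) as [|p|p] eqn:Eup.
  { simpl in Hup. lra. }
  2:{ pose proof (IZR_lt _ _ (Pos2Z.neg_is_neg p)). lra. }
  set (P := IZR (Z.pos p)) in *.
  exists (q * (1 # p))%Q.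
  assert (HrP : Q2R (q * (1 # p)) = Q2R q / P).
  { rewrite Q2R_mult. unfold Q2R at 2. simpl. unfold P. field. apply IZR_nz. }
  set (R := Q2R (q * (1 # p))) in *.
  assert (HR0 : 0 < R) by (rewrite HrP; apply Rdiv_lt_0_compat; lra).
  split. { apply Rlt_Qlt. change (Q2R 0) with (0 * / 1). fold R. lra. }
  assert (C1 : 2 * R * N - Q2R q <= 0).
  { rewrite HrP. unfold Rdiv. apply (Rmult_le_reg_r P). lra. rewrite Rmult_0_l.
    replace ((2 * (Q2R q * / P) * N - Q2R q) * P) with (Q2R q * (2 * N - P)) by (field; lra). nra. }
  assert (C2 : 2 * (2 * R) * N - 2 * Q2R q <= 0) by lra.
  unfold sub. fold R.
  set (z := Dc (add (mul a b) (opp (iota A (Q2R q))))).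
  apply (split_le _ _ _ _ _ (split_case a R Ha HR0)).
  - apply (split_le _ _ _ _ _ (split_case b R Hb HR0)).
    + eapply le_trans; [|apply join_ub1]. apply meet_mono; [apply meet_lb2|apply le_refl].
    + eapply le_trans; [apply (caseA a b N R (Q2R q)); auto|apply bot_min].
  - apply (split_le _ _ _ _ _ (split_case (opp a) R (SA_opp _ Ha) HR0)).
    + apply (split_le _ _ _ _ _ (split_case (opp b) R (SA_opp _ Hb) HR0)).
      * eapply le_trans; [|apply join_ub2]. apply meet_mono; [apply meet_lb2|apply le_refl].
      * eapply le_trans; [|apply bot_min]. eapply le_trans; [|apply (caseA (opp a) (opp b) N R (Q2R q)); auto 10 with sa].
        -- apply meet_mono; [|apply le_refl]. apply meet_mono; [|apply le_refl].
           eapply le_trans; [apply meet_lb1|]. unfold z.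
           replace (mul (opp a) (opp b)) with (mul a b) by ring. apply le_refl.
        -- rewrite <- Na2. f_equal. ring.
    + eapply le_trans; [apply (caseB a b N R (Q2R q)); auto|apply bot_min].
Qed.

Lemma sub_half a q : sub (sub a (q * (1 # 2))) (q * (1 # 2)) = sub a q.
Proof. unfold sub. rewrite Q2R_mult. replace (Q2R (1 # 2)) with (/2) by (unfold Q2R; simpl; field).
  transitivity (add a (opp (iota A (Q2R q * / 2 + Q2R q * / 2)))).
  inorm. f_equal. f_equal. f_equal. field. Qed.

Lemma E_mul_ge_neg a b r : SA a -> SA b -> (0 < r)%Q ->
  le (meet (Dc (sub (opp a) r)) (Dc (sub (opp b) r))) (Dc (sub (mul a b) (r * r))).
Proof. intros. replace (mul a b) with (mul (opp a) (opp b)) by ring. apply E_mul_ge; auto with sa. Qed.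

Lemma DL_sub (a : sa A) q : DL (sa_subq a q) = Dc (sub (proj1_sig a) q).
Proof. exact (D_Dc (sa_subq a q)). Qed.
Lemma DL_Dc (a : sa A) : DL a = Dc (proj1_sig a).
Proof. exact (D_Dc a). Qed.
Lemma SA_proj (a : sa A) : SA (proj1_sig a).
Proof. exact (proj2_sig a). Qed.
End DL.


Section Idl.
Variable L : DLattice.

Definition is_ideal (I : L -> Prop) : Prop :=
  (forall x y, le y x -> I x -> I y) /\ I bot /\ (forall x y, I x -> I y -> I (join x y)).

Definition Idl := { I : L -> Prop | is_ideal I }.
Definition ival (I : Idl) : L -> Prop := proj1_sig I.
Coercion ival : Idl >-> Funclass.

Lemma Idl_ext (I J : Idl) : (forall x, I x <-> J x) -> I = J.
Proof. destruct I as [I HI], J as [J HJ]; unfold ival; simpl; intros H.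
  assert (I = J) by (apply functional_extensionality; intros; apply propositional_extensionality; auto).
  subst. f_equal. apply proof_irrelevance. Qed.

Lemma idl_down (I : Idl) x y : le y x -> I x -> I y.
Proof. apply (proj2_sig I). Qed.
Lemma idl_bot (I : Idl) : I bot.
Proof. apply (proj2_sig I). Qed.
Lemma idl_join (I : Idl) x y : I x -> I y -> I (join x y).
Proof. apply (proj2_sig I). Qed.
Lemma idl_bigjoin (I : Idl) (l : list L) : (forall y, In y l -> I y) -> I (bigjoin l).
Proof. induction l; simpl; intros H. apply idl_bot. apply idl_join; auto. Qed.

Definition Ile (I J : Idl) : Prop := forall x, I x -> J x.

Lemma meet_ideal (I J : Idl) : is_ideal (fun x => I x /\ J x).
Proof. split; [|split].
  - intros x y H [H1 H2]; split; eapply idl_down; eauto.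
  - split; apply idl_bot.
  - intros x y [] []; split; apply idl_join; auto. Qed.
Definition Imeet (I J : Idl) : Idl := exist _ _ (meet_ideal I J).

Definition genP (S : Idl -> Prop) (x : L) : Prop :=
  exists l, (forall y, In y l -> exists I, S I /\ I y) /\ le x (bigjoin l).

Lemma bigjoin_app (l1 l2 : list L) : le (join (bigjoin l1) (bigjoin l2)) (bigjoin (l1 ++ l2)).
Proof. apply join_leI; apply bigjoin_le; intros; apply le_bigjoin; apply in_or_app; auto. Qed.

Lemma gen_ideal S : is_ideal (genP S).
Proof. split; [|split].
  - intros x y H [l [Hl Hx]]. exists l. split; auto. eapply le_trans; eauto.
  - exists nil. split. intros _ []. apply le_refl.
  - intros x y [l1 [H1 E1]] [l2 [H2 E2]]. exists (l1 ++ l2). split.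
    + intros z Hz. apply in_app_or in Hz. destruct Hz; auto.
    + eapply le_trans; [|apply bigjoin_app]. apply join_mono; auto. Qed.
Definition Isup (S : Idl -> Prop) : Idl := exist _ _ (gen_ideal S).

Lemma top_ideal : is_ideal (fun _ : L => True).
Proof. split; auto. Qed.
Definition Itop : Idl := exist _ _ top_ideal.

Lemma Ile_refl I : Ile I I. Proof. firstorder. Qed.
Lemma Ile_trans I J K : Ile I J -> Ile J K -> Ile I K. Proof. firstorder. Qed.
Lemma Ile_antisym I J : Ile I J -> Ile J I -> I = J.
Proof. intros; apply Idl_ext; firstorder. Qed.
Lemma Imeet_glb I J K : Ile K (Imeet I J) <-> (Ile K I /\ Ile K J).
Proof. unfold Ile, Imeet, ival; simpl. firstorder. Qed.
Lemma Isup_lub S Z : Ile (Isup S) Z <-> (forall I, S I -> Ile I Z).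
Proof. split.
  - intros H I SI x Ix. apply H. exists (x :: nil). split.
    + intros y [<-|[]]. eauto.
    + simpl. apply join_ub1.
  - intros H x [l [Hl Hx]]. eapply idl_down; [apply Hx|]. apply idl_bigjoin.
    intros y Hy. destruct (Hl y Hy) as [I [SI Iy]]. eapply H; eauto. Qed.
Lemma Itop_max I : Ile I Itop. Proof. unfold Ile, Itop, ival; simpl; auto. Qed.

Lemma Idistr X S : Imeet X (Isup S) = Isup (fun Y => exists s, S s /\ Y = Imeet X s).
Proof. apply Idl_ext. intros x. unfold Imeet, Isup, ival; simpl. split.
  - intros [Xx [l [Hl Hx]]]. exists (map (meet x) l). split.
    + intros y Hy. apply in_map_iff in Hy. destruct Hy as [y0 [<- Hy0]].
      destruct (Hl y0 Hy0) as [I [SI Iy0]]. exists (Imeet X I). split. eauto.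
      unfold Imeet, ival; simpl. split; eapply idl_down; eauto; [apply meet_lb1|apply meet_lb2].
    + rewrite <- meet_bigjoin. apply le_meetI; auto. apply le_refl.
  - intros [l [Hl Hx]]. split.
    + eapply idl_down; [apply Hx|]. apply idl_bigjoin. intros y Hy.
      destruct (Hl y Hy) as [I [[s [Ss ->]] Iy]]. apply Iy.
    + exists l. split; auto. intros y Hy.
      destruct (Hl y Hy) as [I [[s [Ss ->]] Iy]]. exists s. split; auto. apply Iy. Qed.

Definition IFrame : Frame := {|
  fcar := Idl; fle := Ile; fmeet := Imeet; fsup := Isup; ftop := Itop;
  fle_refl := Ile_refl; fle_trans := Ile_trans; fle_antisym := Ile_antisym;
  fmeet_glb := Imeet_glb; fsup_lub := Isup_lub; ftop_max := Itop_max; frame_distr := Idistr |}.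
End Idl.


Section Ind.
Variable A : CommCStarAlg.
Variable L : DLattice.
Variable DL : sa A -> L.
Hypothesis HL : is_LA L DL.
Variable P : L -> Prop.
Hypothesis Pm : forall x y, P x -> P y -> P (meet x y).
Hypothesis Pj : forall x y, P x -> P y -> P (join x y).
Hypothesis Pt : P top.
Hypothesis Pb : P bot.
Hypothesis PD : forall a, P (DL a).

Definition SL := { x : L | P x }.
Definition sle (x y : SL) := le (proj1_sig x) (proj1_sig y).
Definition smeet (x y : SL) : SL := exist _ _ (Pm _ _ (proj2_sig x) (proj2_sig y)).
Definition sjoin (x y : SL) : SL := exist _ _ (Pj _ _ (proj2_sig x) (proj2_sig y)).
Definition stop : SL := exist _ _ Pt.
Definition sbot : SL := exist _ _ Pb.

Lemma sext (x y : SL) : proj1_sig x = proj1_sig y -> x = y.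
Proof. destruct x, y; simpl; intros; subst; f_equal; apply proof_irrelevance. Qed.

Definition SLat : DLattice.
Proof.
  refine {| lcar := SL; le := sle; meet := smeet; join := sjoin; top := stop; bot := sbot |}.
  - intros; apply le_refl.
  - intros x y z; apply le_trans.
  - intros x y H1 H2; apply sext, le_antisym; auto.
  - intros x y z; apply meet_glb.
  - intros x y z; apply join_lub.
  - intros; apply top_max.
  - intros; apply bot_min.
  - intros; apply sext; apply meet_join_distr.
Defined.

Lemma LA_ind : forall x, P x.
Proof.
  destruct HL as [HR HU].
  set (E := fun a => (exist _ (DL a) (PD a) : SLat)).
  destruct (HU SLat E) as [g [Hg [HgD _]]].
  { destruct HR as [R1 [R2 [R3 [R4 R5]]]].
    split; [|split; [|split; [|split]]].
    - apply sext; simpl; apply R1.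
    - intros a; apply sext; simpl; apply R2.
    - intros b; apply sext; simpl; apply R3.
    - intros a b; apply R4.
    - intros a b; apply sext; simpl; apply R5. }
  destruct (HU L DL HR) as [h0 [_ [_ Hu]]].
  assert (Hid : forall x, x = h0 x).
  { apply (Hu (fun x => x)). split; [|split; [|split]]; reflexivity. reflexivity. }
  assert (Hv : forall x, proj1_sig (g x) = h0 x).
  { apply (Hu (fun x => proj1_sig (g x))).
    - destruct Hg as [G1 [G2 [G3 G4]]]. split; [|split; [|split]].
      + intros x y. rewrite G1. reflexivity.
      + intros x y. rewrite G2. reflexivity.
      + rewrite G3. reflexivity.
      + rewrite G4. reflexivity.
    - intros a. rewrite HgD. reflexivity. }
  intros x. rewrite (Hid x), <- Hv. apply (proj2_sig (g x)).
Qed.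
End Ind.


Section EE.
Variable A : CommCStarAlg.
Variable L : DLattice.
Variable DL : sa A -> L.
Hypothesis HR : LA_relations L DL.

Definition Eset (a : sa A) (x : L) : Prop :=
  exists q, (0 < q)%Q /\ le x (Dc A L DL (sub A (proj1_sig a) q)).

Lemma Eset_ideal a : is_ideal L (Eset a).
Proof. pose proof (SA_proj A a) as Ha. split; [|split].
  - intros x y H [q [Hq Hx]]. exists q. split; auto. eapply le_trans; eauto.
  - exists 1%Q. split. reflexivity. apply bot_min.
  - intros x y [q [Hq Hx]] [q' [Hq' Hy]].
    destruct (Qlt_le_dec q q') as [H|H].
    + exists q. split; auto. apply join_leI; auto. eapply le_trans; [apply Hy|].
      apply E_mono; auto. apply Qlt_le_weak; auto.
    + exists q'. split; auto. apply join_leI; auto. eapply le_trans; [apply Hx|].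
      apply E_mono; auto.
Qed.

Definition Eidl (a : sa A) : Idl L := exist _ _ (Eset_ideal a).

Lemma fbot_char (x : L) : ival L (@fbot (IFrame L)) x <-> le x bot.
Proof. unfold fbot; simpl; unfold ival; simpl; unfold genP. split.
  - intros [l [Hl Hx]]. eapply le_trans; [apply Hx|]. apply bigjoin_le.
    intros y Hy. destruct (Hl y Hy) as [I [[] _]].
  - intros H. exists nil. split; auto. intros _ []. Qed.

Lemma eq_fbot (I : Idl L) : (forall x, I x -> le x bot) -> I = @fbot (IFrame L).
Proof. intros H. apply Idl_ext. intros x. rewrite fbot_char. split; auto.
  intros Hx. eapply idl_down; [apply Hx|]. apply idl_bot. Qed.

Lemma in_fjoin (I J : Idl L) x y z : I x -> J y -> le z (join x y) -> ival L (@fjoin (IFrame L) I J) z.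
Proof. intros Ix Jy Hz. unfold fjoin; simpl; unfold ival; simpl; unfold genP.
  exists (x :: y :: nil). split.
  - intros w [<-|[<-|[]]]; [exists I | exists J]; auto.
  - simpl. eapply le_trans; [apply Hz|]. apply join_mono. apply le_refl. apply join_ub1. Qed.

Lemma Q_half_pos q : (0 < q)%Q -> (0 < q * (1 # 2))%Q.
Proof. intros H. apply Rlt_Qlt. rewrite Q2R_mult. pose proof (Q2R_pos _ H).
  replace (Q2R (1 # 2)) with (/2) by (unfold Q2R; simpl; field). change (Q2R 0) with (0 * / 1). lra. Qed.

Lemma Eidl_rel : OA_relations (IFrame L) Eidl.
Proof. split; [|split; [|split; [|split; [|split]]]].
  - apply Idl_ext. intros x. unfold Eidl, ival; simpl. split; auto. intros _.
    exists (1 # 2)%Q. split. reflexivity. change (proj1_sig (sa_one A)) with (@one A).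
    rewrite E_one; auto. apply top_max.
  - intros a. apply eq_fbot. intros x [[q [Hq Hx]] [q' [Hq' Hx']]].
    eapply le_trans; [|apply (E_opp A L DL HR (proj1_sig a) q q'); auto; apply SA_proj].
    apply le_meetI; auto.
  - intros b. apply eq_fbot. intros x [q [Hq Hx]]. simpl in Hx.
    rewrite E_sq in Hx; auto. apply SA_proj.
  - intros a b x [q [Hq Hx]]. eapply in_fjoin.
    + exists (q * (1 # 2))%Q. split. apply Q_half_pos; auto. apply le_refl.
    + exists (q * (1 # 2))%Q. split. apply Q_half_pos; auto. apply le_refl.
    + eapply le_trans; [apply Hx|]. apply E_add; auto; apply SA_proj.
  - intros a b. apply Idl_ext. intros x. split.
    + intros [q [Hq Hx]].
      destruct (E_mul_le A L DL HR (proj1_sig a) (proj1_sig b) q (SA_proj A a) (SA_proj A b) Hq) as [r [Hr Hle]].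
      eapply in_fjoin; [| |eapply le_trans; [apply Hx|apply Hle]].
      * split; exists r; split; auto; [apply meet_lb1 | apply meet_lb2].
      * split; exists r; split; auto; [apply meet_lb1 | apply meet_lb2].
    + intros [l [Hl Hx]]. eapply idl_down; [apply Hx|]. apply idl_bigjoin. intros y Hy.
      destruct (Hl y Hy) as [I [[-> | ->] [[q1 [H1 E1]] [q2 [H2 E2]]]]].
      * destruct (Qlt_le_dec q1 q2) as [H|H].
        -- exists (q1 * q1)%Q. split. apply Qmult_lt_0_compat; auto.
           eapply le_trans; [|apply E_mul_ge; auto; apply SA_proj]. apply le_meetI; auto.
           eapply le_trans; [apply E2|]. apply E_mono; auto. apply SA_proj. apply Qlt_le_weak; auto.
        -- exists (q2 * q2)%Q. split. apply Qmult_lt_0_compat; auto.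
           eapply le_trans; [|apply E_mul_ge; auto; apply SA_proj]. apply le_meetI; auto.
           eapply le_trans; [apply E1|]. apply E_mono; auto. apply SA_proj.
      * destruct (Qlt_le_dec q1 q2) as [H|H].
        -- exists (q1 * q1)%Q. split. apply Qmult_lt_0_compat; auto.
           eapply le_trans; [|apply E_mul_ge_neg; auto; apply SA_proj]. apply le_meetI; auto.
           eapply le_trans; [apply E2|]. apply E_mono; auto. apply SA_opp, SA_proj. apply Qlt_le_weak; auto.
        -- exists (q2 * q2)%Q. split. apply Qmult_lt_0_compat; auto.
           eapply le_trans; [|apply E_mul_ge_neg; auto; apply SA_proj]. apply le_meetI; auto.
           eapply le_trans; [apply E1|]. apply E_mono; auto. apply SA_opp, SA_proj.
  - intros a x [q [Hq Hx]].
    apply (proj1 (fsup_lub (IFrame L) _ _) (fle_refl _ _) (Eidl (sa_subq a (q * (1 # 2))))).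
    + exists (q * (1 # 2))%Q. split; auto. apply Q_half_pos; auto.
    + exists (q * (1 # 2))%Q. split. apply Q_half_pos; auto.
      change (proj1_sig (sa_subq a (q * (1 # 2)))) with (sub A (proj1_sig a) (q * (1 # 2))).
      rewrite sub_half. auto.
Qed.
End EE.


Lemma meet_sups {L : DLattice} {O : Frame} (f : L -> O) (Hf : dlat_frame_hom f) (U V : L -> Prop) :
  fle (fmeet (fsup (image f U)) (fsup (image f V))) (fsup (image f (meet_sets U V))).
Proof.
  rewrite frame_distr. apply fsup_le. intros y [s [[x [Vx ->]] ->]].
  rewrite fmeet_comm, frame_distr. apply fsup_le. intros y [t [[x' [Ux' ->]] ->]].
  rewrite <- (proj1 Hf). apply fle_sup. exists (meet x' x). split; auto.
  exists x', x. auto. rewrite meet_comm. reflexivity.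
Qed.

Lemma pick_list {L : DLattice} (U : L -> Prop) (l : list L) :
  (forall y, In y l -> exists u, U u /\ le y u) ->
  exists U0, (forall u, In u U0 -> U u) /\ le (bigjoin l) (bigjoin U0).
Proof. induction l; intros H.
  - exists nil. split. intros _ []. apply le_refl.
  - destruct (H a (or_introl eq_refl)) as [u [Uu Hu]].
    destruct IHl as [U0 [H1 H2]]. intros; apply H; simpl; auto.
    exists (u :: U0). split. intros v [<-|Hv]; auto. simpl. apply join_mono; auto.
Qed.

Theorem theorem3 (A : CommCStarAlg)
    (L : DLattice) (DL : sa A -> L) (HL : is_LA L DL)
    (O : Frame) (DO : sa A -> O) (HO : is_OA O DO)
    (f : L -> O) (Hf : dlat_frame_hom f) (HfD : forall a, f (DL a) = DO a)
    (cov : L -> (L -> Prop) -> Prop)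
    (Hcov : forall x U, cov x U <-> fle (f x) (fsup (image f U))) :
  (* (a) *)
  (is_covering cov /\
   exists (phi : O -> (L -> Prop)) (psi : (L -> Prop) -> O),
     (forall u, in_F cov (phi u)) /\
     (forall u v, fle u v <-> (forall x, phi u x -> phi v x)) /\
     (forall u, psi (phi u) = u) /\
     (forall U, in_F cov U -> forall x, phi (psi U) x <-> U x) /\
     (forall a x, phi (DO a) x <-> F_image cov (downset (DL a)) x))
  /\
  (* (b) *)
  (forall (a : sa A) (U : L -> Prop),
     cov (DL a) U <->
     (forall q : Q, (0 < q)%Q ->
        exists U0 : list L, (forall u, In u U0 -> U u) /\
                            le (DL (sa_subq a q)) (bigjoin U0))).
Proof.
  pose proof (proj1 HL) as HR.
  destruct HO as [HOR HOU].
  destruct (HOU (IFrame L) (Eidl A L DL HR) (Eidl_rel A L DL HR)) as [h [Hh [HhD _]]].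
  set (k := fun I : IFrame L => fsup (image f (ival L I))).
  pose proof (dfhom_mono f Hf) as fmono.
  pose proof Hf as Hf'; destruct Hf' as [Hfm [Hfj [Hft Hfb]]].
  assert (Hk : frame_hom (F:=IFrame L) (G:=O) k).
  { split; [|split].
    - intros I J. apply fle_antisym.
      + apply fsup_le. intros y [x [[Ix Jx] ->]]. apply fle_meetI; apply fle_sup; exists x; auto.
      + eapply fle_trans. apply (meet_sups f Hf (ival L I) (ival L J)).
        apply fsup_le. intros y [x [[u [v [Iu [Jv ->]]]] ->]]. apply fle_sup. exists (meet u v). split; auto.
        split; eapply idl_down; eauto; [apply meet_lb1 | apply meet_lb2].
    - apply fle_antisym. apply ftop_max. rewrite <- Hft. apply fle_sup. exists top. split; simpl; auto.
      
    - intros S. apply fle_antisym.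
      + apply fsup_le. intros y [x [[l [Hl Hx]] ->]].
        eapply fle_trans. apply fmono. apply Hx.
        apply dfhom_bigjoin. auto. intros y Hy. destruct (Hl y Hy) as [I [SI Iy]].
        eapply fle_trans; [|apply fle_sup; exists I; split; eauto].
        apply fle_sup. exists y. auto.
      + apply fsup_le. intros y [I [SI ->]]. apply fsup_le. intros y [x [Ix ->]].
        apply fle_sup. exists x. split; auto. exists (x :: nil). split.
        * intros w [<-|[]]. eauto.
        * simpl. apply join_ub1. }
  assert (HkE : forall a, k (Eidl A L DL HR a) = DO a).
  { intros a. apply fle_antisym.
    - apply fsup_le. intros y [x [[q [Hq Hx]] ->]]. rewrite <- HfD. apply fmono.
      eapply le_trans; [apply Hx|]. rewrite (DL_Dc A L DL a). apply E_le; auto. apply SA_proj.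
      apply Qlt_le_weak; auto.
    - eapply fle_trans. apply (proj2 (proj2 (proj2 (proj2 (proj2 HOR))))).
      apply fsup_le. intros y [r [Hr ->]]. rewrite <- HfD. apply fle_sup.
      exists (DL (sa_subq a r)). split; auto. exists r. split; auto.
      rewrite DL_sub. apply le_refl. }
  assert (Hkh : forall u, k (h u) = u).
  { destruct (HOU O DO HOR) as [h0 [_ [_ Hu]]].
    intros u. rewrite (Hu (fun u => k (h u))), (Hu (fun u => u)); auto.
    - split; [|split]; auto. intros S. f_equal.
      apply functional_extensionality; intros y; apply propositional_extensionality.
      unfold image. split. intros Sy; exists y; auto. intros [x [Sx ->]]; auto.
    - destruct Hh as [H1 [H2 H3]]. destruct Hk as [K1 [K2 K3]]. split; [|split].
      + intros x y. rewrite H1, K1. reflexivity.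
      + rewrite H2, K2. reflexivity.
      + intros S. rewrite H3, K3. f_equal.
        apply functional_extensionality; intros y; apply propositional_extensionality.
        unfold image. split.
        * intros [I [[x [Sx ->]] ->]]. exists x. auto.
        * intros [x [Sx ->]]. exists (h x). split; auto. exists x; auto.
    - intros a. rewrite HhD. apply HkE. }
  assert (Hhf : forall x y, ival L (h (f x)) y -> le y x).
  { apply (LA_ind A L DL HL (fun x => forall y, ival L (h (f x)) y -> le y x)); cbv beta.
    - intros x y Px Py z. rewrite Hfm, (proj1 Hh). intros [H1 H2]. apply le_meetI; auto.
    - intros x y Px Py z. rewrite Hfj. unfold fjoin. rewrite (proj2 (proj2 Hh)).
      intros [l [Hl Hz]]. eapply le_trans; [apply Hz|]. apply bigjoin_le. intros w Hw.
      destruct (Hl w Hw) as [I [[t [[-> | ->] ->]] It]].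
      + eapply le_trans. apply Px; auto. apply join_ub1.
      + eapply le_trans. apply Py; auto. apply join_ub2.
    - intros; apply top_max.
    - intros z. rewrite Hfb. unfold fbot. rewrite (proj2 (proj2 Hh)).
      intros [l [Hl Hz]]. eapply le_trans; [apply Hz|]. apply bigjoin_le. intros w Hw.
      destruct (Hl w Hw) as [I [[t [[] _]] _]].
    - intros a z. rewrite HfD, HhD. intros [q [Hq Hz]]. eapply le_trans; [apply Hz|].
      rewrite (DL_Dc A L DL a). apply E_le; auto. apply SA_proj. apply Qlt_le_weak; auto. }
  assert (Hdens : forall u, fsup (image f (fun x => fle (f x) u)) = u).
  { intros u. apply fle_antisym.
    - apply fsup_le. intros y [x [Hx ->]]. auto.
    - rewrite <- (Hkh u) at 1. apply fsup_le. intros y [x [Hx ->]]. apply fle_sup. exists x. split; auto.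
      rewrite <- (Hkh u). apply fle_sup. exists x. auto. }
  split; [split|].
  - split; [|split; [|split]].
    + intros x U Ux. apply Hcov. apply fle_sup. exists x. auto.
    + intros x U V HU HV. apply Hcov. apply Hcov in HU. eapply fle_trans; [apply HU|].
      apply fsup_le. intros y [z [Uz ->]]. apply Hcov. auto.
    + intros x y U HU. apply Hcov. apply Hcov in HU. rewrite Hfm.
      eapply fle_trans; [apply fmeet_lb1|]. auto.
    + intros x U V HU HV. apply Hcov. apply Hcov in HU. apply Hcov in HV.
      eapply fle_trans; [|apply (meet_sups f Hf)]. apply fle_meetI; auto.
  - exists (fun u x => fle (f x) u), (fun U => fsup (image f U)).
    split; [|split; [|split; [|split]]].
    + intros u. split.
      * intros x y Hyx Hx. eapply fle_trans; [apply fmono|]; eauto.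
      * intros x Hx. apply Hcov in Hx. eapply fle_trans; [apply Hx|].
        apply fsup_le. intros y [z [Hz ->]]. auto.
    + intros u v. split.
      * intros H x Hx. eapply fle_trans; eauto.
      * intros H. rewrite <- (Hdens u), <- (Hdens v). apply fsup_mono.
        intros y [x [Hx ->]]. exists (f x). split. exists x; auto. apply fle_refl.
    + apply Hdens.
    + intros U [HU1 HU2] x. split.
      * intros Hx. apply HU2. apply Hcov. auto.
      * intros Ux. apply fle_sup. exists x; auto.
    + intros a x. split.
      * intros Hx V [HV1 HV2] HV. apply HV2. apply Hcov. eapply fle_trans; [apply Hx|].
        rewrite <- HfD. apply fle_sup. exists (DL a). split; auto. apply HV. apply le_refl.
      * intros Hx. apply Hx.
        -- split.
           ++ intros z y Hyz Hz. eapply fle_trans; [apply fmono|]; eauto.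
           ++ intros z Hz. apply Hcov in Hz. eapply fle_trans; [apply Hz|].
              apply fsup_le. intros y [w [Hw ->]]. auto.
        -- intros y Hy. rewrite <- HfD. apply fmono. auto.
  - intros a U. rewrite Hcov. split.
    + intros H q Hq.
      assert (Hin : ival L (h (f (DL a))) (DL (sa_subq a q))).
      { rewrite HfD, HhD. exists q. split; auto. rewrite DL_sub. apply le_refl. }
      apply (frame_hom_mono h Hh) in H. apply H in Hin.
      rewrite (proj2 (proj2 Hh)) in Hin. destruct Hin as [l [Hl Hle]].
      destruct (pick_list U l) as [U0 [HU0 HlU0]].
      { intros y Hy. destruct (Hl y Hy) as [I [[t [[u [Uu ->]] ->]] It]].
        exists u. split; auto. }
      exists U0. split; auto. eapply le_trans; eauto.
    + intros H. rewrite HfD. eapply fle_trans. apply (proj2 (proj2 (proj2 (proj2 (proj2 HOR))))).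
      apply fsup_le. intros y [r [Hr ->]]. destruct (H r Hr) as [U0 [HU0 Hle]].
      rewrite <- HfD. eapply fle_trans. apply fmono. apply Hle.
      apply dfhom_bigjoin. auto. intros u Hu. apply fle_sup. exists u. auto.
Qed.
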